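(* For every $\xi\in\mathbb R^3\setminus\{0\}$, all eigenvalues of the matrix $$A(\xi)=\begin{pmatrix}0&|\xi|&0&0\\-|\xi|&\nu|\xi|^2&-|\xi|&-\frac{1}{3\mathcal C}|\xi|\\0&\frac23|\xi|&\frac23\kappa|\xi|^2+\frac{2\gamma}{3}&-\frac23 b_0\\0&0&-\mathcal C\gamma&a|\xi|^2+\mathcal Cb_0\end{pmatrix}$$ have strictly positive real part. Equivalently, writing $\varrho=|\xi|$ and $\det(A-\lambda I)=\lambda^4-a_1\lambda^3+a_2\lambda^2-a_3\lambda+a_4$, one has $a_1>0$, $A_2:=a_1a_2-a_3>0$ and $A_3:=a_3(a_1a_2-a_3)-a_1^2a_4>0$ for all $\varrho>0$, where $$a_1=(a+\tfrac23\kappa+\nu)\varrho^2+\tfrac{2\gamma}{3}+\mathcal Cb_0,$$ $$a_2=\Big[(\nu a+\tfrac23\nu\kappa+\tfrac23a\kappa)\varrho^2+\tfrac{2\gamma\nu}{3}+\mathcal Cb_0\nu+\tfrac{2\gamma a}{3}+\tfrac{2\kappa\mathcal Cb_0}{3}+\tfrac53\Big]\varrho^2,$$ $$a_3=\Big[\tfrac23a\kappa\nu\varrho^4+\big(\tfrac{2(\gamma a+\kappa\mathcal Cb_0)\nu}{3}+\tfrac{5a}{3}+\tfrac{2\kappa}{3}\big)\varrho^2+\tfrac53\mathcal Cb_0+\tfrac{8\gamma}{9}\Big]\varrho^2,$$ $$a_4=\tfrac23\big(a\kappa\varrho^2+a\gamma+\kappa\mathcal Cb_0\big)\varrho^4.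$$
   Context: Constants: $\mathcal C,\mathcal L,\sigma_a,\sigma_s>0$, $\mu>0$, $\lambda=\zeta-\frac23\mu$ with $\zeta\ge0$, $\kappa>0$, $b'(1)>0$ (derivative at $1$ of a given smooth function $b$). Set $\nu=\lambda+2\mu$, $\gamma=\mathcal L\sigma_a b'(1)$, $a=\frac{\mathcal C}{3\mathcal L(\sigma_a+\sigma_s)}$, $b_0=\mathcal L\sigma_a$. The matrix $A(\xi)$ is the Fourier symbol of the linearized (compressible part of the) diffusion approximation radiation hydrodynamics system in the variables $(\hat\rho,\hat d,\hat\theta,\hat j_0)$ with $d=\Lambda^{-1}\mathrm{div}\,u$, $\Lambda=(-\Delta)^{1/2}$. *)

(* Defs.v *)
From HB Require Import structures.
From mathcomp Require Import all_boot all_order all_algebra.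
From mathcomp.real_closed Require Import complex.
Set Implicit Arguments. Unset Strict Implicit. Unset Printing Implicit Defensive.
Import Order.TTheory GRing.Theory Num.Theory.
Local Open Scope ring_scope.

Record rhd_params (R : rcfType) := RhdParams {
  pC : R; pL : R; psa : R; pss : R; pmu : R; pzeta : R; pkappa : R;
  pdb1 : R (* the value b'(1) *) }.

Section Consts.
Variable R : rcfType.
Variable P : rhd_params R.
Local Notation C := (pC P). Local Notation L := (pL P).
Local Notation sa := (psa P). Local Notation ss := (pss P).
Local Notation mu := (pmu P). Local Notation zeta := (pzeta P).
Local Notation kappa := (pkappa P). Local Notation db1 := (pdb1 P).

Definition lam_c : R := zeta - (2%:R / 3%:R) * mu.
Definition nu_c : R := lam_c + 2%:R * mu.
Definition gamma_c : R := L * sa * db1.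
Definition a_c : R := C / (3%:R * L * (sa + ss)).
Definition b0_c : R := L * sa.

(* Entries of A(xi) as functions of rho = |xi| (0-based indices). *)
Definition Aentry (rho : R) (i j : nat) : R :=
  match i, j with
  | 0, 1 => rho
  | 1, 0 => - rho
  | 1, 1 => nu_c * rho ^+ 2
  | 1, 2 => - rho
  | 1, 3 => - (1 / (3%:R * C)) * rho
  | 2, 1 => (2%:R / 3%:R) * rho
  | 2, 2 => (2%:R / 3%:R) * kappa * rho ^+ 2 + 2%:R * gamma_c / 3%:R
  | 2, 3 => - (2%:R / 3%:R) * b0_c
  | 3, 2 => - C * gamma_c
  | 3, 3 => a_c * rho ^+ 2 + C * b0_c
  | _, _ => 0
  end.

Definition Arho (rho : R) : 'M[R]_4 := \matrix_(i < 4, j < 4) Aentry rho i j.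

Definition xnorm (xi : 'rV[R]_3) : R := Num.sqrt (\sum_(i < 3) xi 0 i ^+ 2).

Definition Axi (xi : 'rV[R]_3) : 'M[R[i]]_4 := map_mx (fun x => (x%:C)%C) (Arho (xnorm xi)).

Definition coef_a1 (rho : R) : R :=
  (a_c + (2%:R/3%:R) * kappa + nu_c) * rho ^+ 2 + 2%:R * gamma_c / 3%:R + C * b0_c.
Definition coef_a2 (rho : R) : R :=
  ((nu_c * a_c + (2%:R/3%:R) * nu_c * kappa + (2%:R/3%:R) * a_c * kappa) * rho ^+ 2
   + 2%:R * gamma_c * nu_c / 3%:R + C * b0_c * nu_c + 2%:R * gamma_c * a_c / 3%:R
   + 2%:R * kappa * C * b0_c / 3%:R + 5%:R / 3%:R) * rho ^+ 2.
Definition coef_a3 (rho : R) : R :=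
  ((2%:R/3%:R) * a_c * kappa * nu_c * rho ^+ 4
   + (2%:R * (gamma_c * a_c + kappa * C * b0_c) * nu_c / 3%:R + 5%:R * a_c / 3%:R
      + 2%:R * kappa / 3%:R) * rho ^+ 2
   + (5%:R/3%:R) * C * b0_c + (8%:R/9%:R) * gamma_c) * rho ^+ 2.
Definition coef_a4 (rho : R) : R :=
  (2%:R/3%:R) * (a_c * kappa * rho ^+ 2 + a_c * gamma_c + kappa * C * b0_c) * rho ^+ 4.

Definition coef_A2 (rho : R) : R := coef_a1 rho * coef_a2 rho - coef_a3 rho.
Definition coef_A3 (rho : R) : R :=
  coef_a3 rho * (coef_a1 rho * coef_a2 rho - coef_a3 rho) - coef_a1 rho ^+ 2 * coef_a4 rho.
End Consts.

(* Main.v *)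
Require Import Defs.
From HB Require Import structures.
From mathcomp Require Import all_boot all_order all_algebra.
From mathcomp.real_closed Require Import complex.
From mathcomp Require Import ring lra.
Import Order.TTheory GRing.Theory Num.Theory.
Local Open Scope ring_scope.

Lemma det4 (R : comNzRingType) (f : nat -> nat -> R) :
  \det (\matrix_(i < 4, j < 4) f i j) =
  let a i j := f i j in
  a 0%N 0%N * (a 1%N 1%N * (a 2%N 2%N * a 3%N 3%N - a 2%N 3%N * a 3%N 2%N) - a 1%N 2%N * (a 2%N 1%N * a 3%N 3%N - a 2%N 3%N * a 3%N 1%N) + a 1%N 3%N * (a 2%N 1%N * a 3%N 2%N - a 2%N 2%N * a 3%N 1%N))
 - a 0%N 1%N * (a 1%N 0%N * (a 2%N 2%N * a 3%N 3%N - a 2%N 3%N * a 3%N 2%N) - a 1%N 2%N * (a 2%N 0%N * a 3%N 3%N - a 2%N 3%N * a 3%N 0%N) + a 1%N 3%N * (a 2%N 0%N * a 3%N 2%N - a 2%N 2%N * a 3%N 0%N))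
 + a 0%N 2%N * (a 1%N 0%N * (a 2%N 1%N * a 3%N 3%N - a 2%N 3%N * a 3%N 1%N) - a 1%N 1%N * (a 2%N 0%N * a 3%N 3%N - a 2%N 3%N * a 3%N 0%N) + a 1%N 3%N * (a 2%N 0%N * a 3%N 1%N - a 2%N 1%N * a 3%N 0%N))
 - a 0%N 3%N * (a 1%N 0%N * (a 2%N 1%N * a 3%N 2%N - a 2%N 2%N * a 3%N 1%N) - a 1%N 1%N * (a 2%N 0%N * a 3%N 2%N - a 2%N 2%N * a 3%N 0%N) + a 1%N 2%N * (a 2%N 0%N * a 3%N 1%N - a 2%N 1%N * a 3%N 0%N)).
Proof.
rewrite (expand_det_row _ 0) !big_ord_recl big_ord0 /cofactor.
rewrite !(expand_det_row _ 0) !big_ord_recl !big_ord0 /cofactor.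
rewrite !(expand_det_row _ 0) !big_ord_recl !big_ord0 /cofactor.
rewrite !det_mx11 !mxE /= /bump /=.
rewrite -!plusE /=.
ring.
Qed.

Lemma hurwitz4 (R : realFieldType) (a1 a2 a3 a4 x y : R) :
  0 < a1 -> 0 < a3 -> 0 < a4 -> 0 < a1 * a2 - a3 ->
  0 < a3 * (a1 * a2 - a3) - a1 ^+ 2 * a4 ->
  (x^+4 - 6%:R*x^+2*y^+2 + y^+4) - a1 * (x^+3 - 3%:R*x*y^+2) + a2 * (x^+2 - y^+2) - a3 * x + a4 = 0 ->
  (4%:R*x^+3*y - 4%:R*x*y^+3) - a1 * (3%:R*x^+2*y - y^+3) + a2 * (2%:R*x*y) - a3 * y = 0 ->
  0 < x.
Proof.
move=> h1 h3 h4 hA2 hA3 eP1 eP2.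
set u := x^+2 - y^+2; set N := x^+2 + y^+2.
set c := a1 * a2 - a3.
set Ge := a3*a4 + 2%:R*a1*a4*u + c*N^+2.
set Go := N*(a2*a3 - a1*a4 + 2%:R*a3*u + a1*N^+2).
set Q1 := (x^+4 - 6%:R*x^+2*y^+2 + y^+4) + a1 * (x^+3 - 3%:R*x*y^+2) + a2 * (x^+2 - y^+2) + a3 * x + a4.
set Q2 := (4%:R*x^+3*y - 4%:R*x*y^+3) + a1 * (3%:R*x^+2*y - y^+3) + a2 * (2%:R*x*y) + a3 * y.
have id : 4%:R * x * (Ge + Go) = Q1^+2 + Q2^+2
   - ((x^+4 - 6%:R*x^+2*y^+2 + y^+4) - a1 * (x^+3 - 3%:R*x*y^+2) + a2 * (x^+2 - y^+2) - a3 * x + a4)^+2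
   - ((4%:R*x^+3*y - 4%:R*x*y^+3) - a1 * (3%:R*x^+2*y - y^+3) + a2 * (2%:R*x*y) - a3 * y)^+2.
  by rewrite /Ge /Go /Q1 /Q2 /u /N /c; ring.
rewrite eP1 eP2 expr0n /= !subr0 in id.
have uN : u^+2 <= N^+2.
  rewrite /u /N; have : 0 <= x^+2 * y^+2 by apply: mulr_ge0; apply: sqr_ge0.
  move=> H; nra.
have hGe : 0 < Ge.
  have : 0 < c * Ge.
    have e : c * Ge = (c*u + a1*a4)^+2 + a4 * (a3 * c - a1^+2*a4) + c^+2 * (N^+2 - u^+2).
      by rewrite /Ge; ring.
    rewrite e; have := sqr_ge0 (c*u + a1*a4).
    have : 0 < a4 * (a3 * c - a1^+2*a4) by apply: mulr_gt0.
    have : 0 <= c^+2 * (N^+2 - u^+2) by apply: mulr_ge0; [apply: sqr_ge0 | rewrite subr_ge0].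
    lra.
  by rewrite pmulr_rgt0.
have hGo : 0 <= Go.
  apply: mulr_ge0; first by rewrite /N addr_ge0 ?sqr_ge0.
  have : 0 < a1 * (a2*a3 - a1*a4 + 2%:R*a3*u + a1*N^+2).
    have e : a1 * (a2*a3 - a1*a4 + 2%:R*a3*u + a1*N^+2) = (a1*u + a3)^+2 + (a3 * c - a1^+2*a4) + a1^+2 * (N^+2 - u^+2).
      by rewrite /c; ring.
    rewrite e; have := sqr_ge0 (a1*u + a3).
    have : 0 <= a1^+2 * (N^+2 - u^+2) by apply: mulr_ge0; [apply: sqr_ge0 | rewrite subr_ge0].
    lra.
  by rewrite pmulr_rgt0 // => /ltW.
have hG : 0 < Ge + Go by lra.
have hx : 0 <= x.
  have : 0 <= 4%:R * x * (Ge + Go) by rewrite id addr_ge0 ?sqr_ge0.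
  by rewrite pmulr_lge0 // pmulr_rge0 // ltr0n.
rewrite lt_def hx andbT; apply/negP => /eqP x0.
rewrite x0 in eP1 eP2.
have ey : y * (a1 * y^+2 - a3) = 0 by rewrite -eP2; ring.
move/eqP: ey; rewrite mulf_eq0 => /orP [/eqP y0 | ].
  have e : a4 = (0^+4 - 6%:R*0^+2*y^+2 + y^+4) - a1 * (0^+3 - 3%:R*0*y^+2) + a2 * (0^+2 - y^+2) - a3 * 0 + a4.
    by rewrite y0; ring.
  by move: h4; rewrite e eP1 ltxx.
rewrite subr_eq0 => /eqP e3.
have : a1^+2 * ((0^+4 - 6%:R*0^+2*y^+2 + y^+4) - a1 * (0^+3 - 3%:R*0*y^+2) + a2 * (0^+2 - y^+2) - a3 * 0 + a4) = - (a3 * c - a1^+2 * a4).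
  rewrite /c -e3; ring.
rewrite eP1 mulr0 => /eqP; rewrite eq_sym oppr_eq0 => /eqP e0.
by move: hA3; rewrite e0 ltxx.
Qed.

Lemma poly_eq_eval (R : numDomainType) (p q : {poly R}) :
  (forall x, p.[x] = q.[x]) -> p = q.
Proof.
move=> H; apply/eqP; rewrite -subr_eq0; apply/negPn/negP => nz.
pose rs : seq R := [seq i%:R | i <- iota 0 (size (p - q))].
have hr : all (root (p - q)) rs.
  by apply/allP => x /mapP [i _ ->]; rewrite /root hornerD hornerN H subrr.
have hu : uniq rs.
  by rewrite map_inj_uniq ?iota_uniq // => i j /eqP; rewrite eqr_nat => /eqP.
by have := max_poly_roots nz hr hu; rewrite size_map size_iota ltnn.
Qed.

Definition cpf (R : rcfType) (P : rhd_params R) (rho x : R) (i j : nat) : R :=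
  (if Nat.eqb i j then x else 0) - Aentry P rho i j.

Arguments cpf {R}.

Lemma charpoly_Arho (R : rcfType) (P : rhd_params R) (rho : R) : 0 < pC P ->
     char_poly (Arho P rho)
       = 'X^4 - (coef_a1 P rho)%:P * 'X^3 + (coef_a2 P rho)%:P * 'X^2
         - (coef_a3 P rho)%:P * 'X + (coef_a4 P rho)%:P.
Proof.
move=> hC; apply: poly_eq_eval => x.
rewrite /char_poly -horner_evalE -det_map_mx.
have -> : map_mx (horner_eval x) (char_poly_mx (Arho P rho)) =
   \matrix_(i < 4, j < 4) cpf P rho x i j.
  apply/matrixP => i j; rewrite !mxE /= horner_evalE hornerD hornerN hornerMn hornerX hornerC.
  rewrite /cpf; congr (_ - _).
  by case: i j => [[|[|[|[|i]]]] hi] [[|[|[|[|j]]]] hj] //=; rewrite ?mulr1n ?mulr0n.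
rewrite det4 /cpf.
have -> : Aentry P rho 0%N 0%N = 0 := erefl.
have -> : Nat.eqb 0%N 0%N = true := erefl.
have -> : Aentry P rho 0%N 1%N = rho := erefl.
have -> : Nat.eqb 0%N 1%N = false := erefl.
have -> : Aentry P rho 0%N 2%N = 0 := erefl.
have -> : Nat.eqb 0%N 2%N = false := erefl.
have -> : Aentry P rho 0%N 3%N = 0 := erefl.
have -> : Nat.eqb 0%N 3%N = false := erefl.
have -> : Aentry P rho 1%N 0%N = - rho := erefl.
have -> : Nat.eqb 1%N 0%N = false := erefl.
have -> : Aentry P rho 1%N 1%N = nu_c P * rho ^+ 2 := erefl.
have -> : Nat.eqb 1%N 1%N = true := erefl.
have -> : Aentry P rho 1%N 2%N = - rho := erefl.
have -> : Nat.eqb 1%N 2%N = false := erefl.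
have -> : Aentry P rho 1%N 3%N = - (1 / (3%:R * pC P)) * rho := erefl.
have -> : Nat.eqb 1%N 3%N = false := erefl.
have -> : Aentry P rho 2%N 0%N = 0 := erefl.
have -> : Nat.eqb 2%N 0%N = false := erefl.
have -> : Aentry P rho 2%N 1%N = (2%:R / 3%:R) * rho := erefl.
have -> : Nat.eqb 2%N 1%N = false := erefl.
have -> : Aentry P rho 2%N 2%N = (2%:R / 3%:R) * pkappa P * rho ^+ 2 + 2%:R * gamma_c P / 3%:R := erefl.
have -> : Nat.eqb 2%N 2%N = true := erefl.
have -> : Aentry P rho 2%N 3%N = - (2%:R / 3%:R) * b0_c P := erefl.
have -> : Nat.eqb 2%N 3%N = false := erefl.
have -> : Aentry P rho 3%N 0%N = 0 := erefl.
have -> : Nat.eqb 3%N 0%N = false := erefl.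
have -> : Aentry P rho 3%N 1%N = 0 := erefl.
have -> : Nat.eqb 3%N 1%N = false := erefl.
have -> : Aentry P rho 3%N 2%N = - pC P * gamma_c P := erefl.
have -> : Nat.eqb 3%N 2%N = false := erefl.
have -> : Aentry P rho 3%N 3%N = a_c P * rho ^+ 2 + pC P * b0_c P := erefl.
have -> : Nat.eqb 3%N 3%N = true := erefl.
rewrite !(hornerD, hornerN, hornerCM, hornerC, hornerX, hornerXn) /coef_a1 /coef_a2 /coef_a3 /coef_a4.
by field; rewrite gt_eqF.
Qed.

Ltac pos := repeat match goal with
  | |- is_true (0 < _%:R) => apply: ltr0Sn
  | |- is_true (0 < _ + _) => apply: addr_gt0
  | |- is_true (0 < _ / _) => apply: divr_gt0
  | |- is_true (0 < _ * _) => apply: mulr_gt0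
  | |- is_true (0 < _ ^+ _) => apply: exprn_gt0
  | |- is_true (0 < _^-1) => rewrite invr_gt0
  | |- is_true (0 < 1) => apply: ltr01
  | |- _ => assumption
  end.


Definition f1 (R : rcfType) (S a K n G m : R) := 3%:R*(a+K+n)*S+G+m.
Definition f2 (R : rcfType) (S a K n G m : R) :=
  9%:R*(n*a+n*K+a*K)*S^+2+3%:R*(G*n+m*n+G*a+K* m)*S+5%:R*S.
Definition f3 (R : rcfType) (S a K n G m : R) :=
  27%:R*a*K*n*S^+3+9%:R*(G*a+K* m)*n*S^+2+15%:R*a*S^+2+9%:R*K*S^+2+5%:R* m*S+4%:R*G*S.
Definition f4 (R : rcfType) (S a K n G m : R) := (3%:R*a*K*S+a*G+K* m)*9%:R*S^+2.

Arguments f1 {R}. Arguments f2 {R}. Arguments f3 {R}. Arguments f4 {R}.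

Lemma coefs_pos_gen (R : rcfType) (S a K n G m : R) :
  0 < S -> 0 < a -> 0 < K -> 0 < n -> 0 < G -> 0 < m ->
  [/\ 0 < f1 S a K n G m,
      0 < f1 S a K n G m * f2 S a K n G m - f3 S a K n G m,
      0 < f3 S a K n G m * (f1 S a K n G m * f2 S a K n G m - f3 S a K n G m)
          - f1 S a K n G m ^+ 2 * f4 S a K n G m,
      0 < f3 S a K n G m & 0 < f4 S a K n G m].
Proof.
move=> hS ha hK hn hG hm.
have -> : f3 S a K n G m * (f1 S a K n G m * f2 S a K n G m - f3 S a K n G m)
          - f1 S a K n G m ^+ 2 * f4 S a K n G m = 5%:R*S^+2*G* m + 4%:R*S^+2*G^+2 + 15%:R*S^+2*n* m^+3 + 42%:R*S^+2*n*G* m^+2 + 39%:R*S^+2*n*G^+2* m + 12%:R*S^+2*n*G^+3 + 6%:R*S^+2*K* m^+3 + 9%:R*S^+2*K*G* m^+2 + 3%:R*S^+2*K*G^+2* m + 6%:R*S^+2*a*G* m^+2 + 9%:R*S^+2*a*G^+2* m + 3%:R*S^+2*a*G^+3 + 75%:R*S^+3*n* m + 60%:R*S^+3*n*G + 45%:R*S^+3*n^+2* m^+2 + 81%:R*S^+3*n^+2*G* m + 36%:R*S^+3*n^+2*G^+2 + 30%:R*S^+3*K* m + 33%:R*S^+3*K*G + 63%:R*S^+3*K*n* m^+2 + 171%:R*S^+3*K*n*G* m + 99%:R*S^+3*K*n*G^+2 + 27%:R*S^+3*K*n^+2* m^+3 + 54%:R*S^+3*K*n^+2*G* m^+2 +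 27%:R*S^+3*K*n^+2*G^+2* m + 18%:R*S^+3*K^+2* m^+2 + 9%:R*S^+3*K^+2*G* m + 27%:R*S^+3*K^+2*n* m^+3 + 27%:R*S^+3*K^+2*n*G* m^+2 + 15%:R*S^+3*a*G + 135%:R*S^+3*a*n* m^+2 + 198%:R*S^+3*a*n*G* m + 72%:R*S^+3*a*n*G^+2 + 27%:R*S^+3*a*n^+2*G* m^+2 + 54%:R*S^+3*a*n^+2*G^+2* m + 27%:R*S^+3*a*n^+2*G^+3 + 54%:R*S^+3*a*K* m^+2 + 72%:R*S^+3*a*K*G* m + 18%:R*S^+3*a*K*G^+2 + 54%:R*S^+3*a*K*n*G* m^+2 + 54%:R*S^+3*a*K*n*G^+2* m + 36%:R*S^+3*a^+2*G* m + 27%:R*S^+3*a^+2*G^+2 + 27%:R*S^+3*a^+2*n*G^+2* m + 27%:R*S^+3*a^+2*n*G^+3 + 135%:R*S^+4*K*n + 270%:R*S^+4*K*n^+2* m + 189%:R*S^+4*K*n^+2*G + 81%:R*S^+4*K*n^+3* m^+2 + 81%:R*S^+4*K*n^+3*G* m + 54%:R*S^+4*K^+2 + 189%:R*S^+4*K^+2*n* m + 270%:R*S^+4*K^+2*n*G + 162%:R*S^+4*K^+2*n^+2* m^+2 + 162%:R*S^+4*K^+2*n^+2*G* m + 81%:R*S^+4*K^+3*n* m^+2 + 225%:R*S^+4*a*n + 270%:R*S^+4*a*n^+2* m + 297%:R*S^+4*a*n^+2*G + 81%:R*S^+4*a*n^+3*G* m + 81%:R*S^+4*a*n^+3*G^+2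 + 90%:R*S^+4*a*K + 378%:R*S^+4*a*K*n* m + 405%:R*S^+4*a*K*n*G + 243%:R*S^+4*a*K*n^+2* m^+2 + 486%:R*S^+4*a*K*n^+2*G* m + 243%:R*S^+4*a*K*n^+2*G^+2 + 108%:R*S^+4*a*K^+2* m + 27%:R*S^+4*a*K^+2*G + 243%:R*S^+4*a*K^+2*n* m^+2 + 324%:R*S^+4*a*K^+2*n*G* m + 405%:R*S^+4*a^+2*n* m + 216%:R*S^+4*a^+2*n*G + 162%:R*S^+4*a^+2*n^+2*G* m + 162%:R*S^+4*a^+2*n^+2*G^+2 + 162%:R*S^+4*a^+2*K* m + 135%:R*S^+4*a^+2*K*G + 324%:R*S^+4*a^+2*K*n*G* m + 243%:R*S^+4*a^+2*K*n*G^+2 + 54%:R*S^+4*a^+3*G + 81%:R*S^+4*a^+3*n*G^+2 + 243%:R*S^+5*K^+2*n^+2 + 243%:R*S^+5*K^+2*n^+3* m + 243%:R*S^+5*K^+3*n + 243%:R*S^+5*K^+3*n^+2* m + 810%:R*S^+5*a*K*n^+2 + 486%:R*S^+5*a*K*n^+3* m + 486%:R*S^+5*a*K*n^+3*G + 567%:R*S^+5*a*K^+2*n + 972%:R*S^+5*a*K^+2*n^+2* m + 729%:R*S^+5*a*K^+2*n^+2*G + 486%:R*S^+5*a*K^+3*n* m + 405%:R*S^+5*a^+2*n^+2 + 243%:R*S^+5*a^+2*n^+3*G + 567%:R*S^+5*a^+2*K*n + 729%:R*S^+5*a^+2*K*n^+2* m + 972%:R*S^+5*a^+2*K*n^+2*G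 + 162%:R*S^+5*a^+2*K^+2 + 729%:R*S^+5*a^+2*K^+2*n* m + 729%:R*S^+5*a^+2*K^+2*n*G + 405%:R*S^+5*a^+3*n + 243%:R*S^+5*a^+3*n^+2*G + 162%:R*S^+5*a^+3*K + 486%:R*S^+5*a^+3*K*n*G + 729%:R*S^+6*a*K^+2*n^+3 + 729%:R*S^+6*a*K^+3*n^+2 + 729%:R*S^+6*a^+2*K*n^+3 + 1458%:R*S^+6*a^+2*K^+2*n^+2 + 729%:R*S^+6*a^+2*K^+3*n + 729%:R*S^+6*a^+3*K*n^+2 + 729%:R*S^+6*a^+3*K^+2*n.
  by rewrite /f1 /f2 /f3 /f4; ring.
have -> : f1 S a K n G m * f2 S a K n G m - f3 S a K n G m = 1%:R*S*G + 3%:R*S*n* m^+2 + 6%:R*S*n*G* m + 3%:R*S*n*G^+2 + 3%:R*S*K* m^+2 + 3%:R*S*K*G* m + 3%:R*S*a*G* m + 3%:R*S*a*G^+2 + 15%:R*S^+2*n + 9%:R*S^+2*n^+2* m + 9%:R*S^+2*n^+2*G + 6%:R*S^+2*K + 18%:R*S^+2*K*n* m + 18%:R*S^+2*K*n*G + 9%:R*S^+2*K^+2* m + 18%:R*S^+2*a*n* m + 18%:R*S^+2*a*n*G + 18%:R*S^+2*a*K* m + 18%:R*S^+2*a*K*G + 9%:R*S^+2*a^+2*G + 27%:R*S^+3*K*n^+2 + 27%:R*S^+3*K^+2*n + 27%:R*S^+3*a*n^+2 + 54%:R*S^+3*a*K*n + 27%:R*S^+3*a*K^+2 + 27%:R*S^+3*a^+2*n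 + 27%:R*S^+3*a^+2*K.
  by rewrite /f1 /f2 /f3; ring.
by rewrite /f1 /f3 /f4; split; pos.
Qed.

Arguments coefs_pos_gen {R S a K n G m}.

Lemma xnorm_gt0 (R : rcfType) (xi : 'rV[R]_3) : xi != 0 -> 0 < xnorm xi.
Proof.
move=> nz; rewrite /xnorm sqrtr_gt0.
have [i hi] : exists i, xi 0 i != 0.
  case: (pickP (fun i => xi 0 i != 0)) => [i hi | h]; first by exists i.
  move: nz; have -> : xi = 0; last by rewrite eqxx.
  by apply/rowP => j; rewrite mxE; move: (h j) => /negbFE/eqP.
rewrite (bigD1 i) //=; apply: ltr_wpDr.
  by apply: sumr_ge0 => j _; exact: sqr_ge0.
by rewrite lt_def sqr_ge0 sqrf_eq0 hi.
Qed.

Arguments xnorm_gt0 {R xi}.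
Arguments hurwitz4 {R a1 a2 a3 a4 x y}.

Lemma cmul (R : rcfType) (a b c d : R) :
  (a +i* b)%C * (c +i* d)%C = ((a*c - b*d) +i* (a*d + b*c))%C.
Proof. by []. Qed.
Lemma cadd (R : rcfType) (a b c d : R) :
  (a +i* b)%C + (c +i* d)%C = ((a + c) +i* (b + d))%C.
Proof. by []. Qed.
Lemma copp (R : rcfType) (a b : R) : - (a +i* b)%C = ((- a) +i* (- b))%C.
Proof. by []. Qed.
Lemma creal (R : rcfType) (a : R) : (a%:C)%C = (a +i* 0)%C.
Proof. by []. Qed.

Lemma quartic_root_re (R : rcfType) (a1 a2 a3 a4 : R) (z : R[i]) :
  root (map_poly (real_complex R)
    ('X^4 - a1%:P * 'X^3 + a2%:P * 'X^2 - a3%:P * 'X + a4%:P)) z ->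
  complex.Re z ^+4 - 6%:R * complex.Re z ^+2 * complex.Im z ^+2 + complex.Im z ^+4
   - a1 * (complex.Re z ^+3 - 3%:R * complex.Re z * complex.Im z ^+2)
   + a2 * (complex.Re z ^+2 - complex.Im z ^+2) - a3 * complex.Re z + a4 = 0 /\
  (4%:R * complex.Re z ^+3 * complex.Im z - 4%:R * complex.Re z * complex.Im z ^+3)
   - a1 * (3%:R * complex.Re z ^+2 * complex.Im z - complex.Im z ^+3)
   + a2 * (2%:R * complex.Re z * complex.Im z) - a3 * complex.Im z = 0.
Proof.
rewrite /root !(rmorphB, rmorphD, rmorphM) /= ?map_polyXn !map_polyX !map_polyC /=.
rewrite !(hornerD, hornerN, hornerCM, hornerM, hornerC, hornerX, hornerXn).
case: z => x y /eqP H.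
have e1 := congr1 (@complex.Re R) H.
have e2 := congr1 (@complex.Im R) H.
simpl in e1, e2.
by rewrite /=; split; [apply: etrans e1 | apply: etrans e2]; ring.
Qed.

Arguments quartic_root_re {R a1 a2 a3 a4 z}.

Theorem mainTheorem5 (R : rcfType) (P : rhd_params R) :
  0 < pC P -> 0 < pL P -> 0 < psa P -> 0 < pss P -> 0 < pmu P -> 0 <= pzeta P ->
  0 < pkappa P -> 0 < pdb1 P ->
  (forall xi : 'rV[R]_3, xi != 0 ->
     forall z : R[i], eigenvalue (Axi P xi) z -> 0 < 'Re z)
  /\
  (forall rho : R, 0 < rho ->
     char_poly (Arho P rho)
       = 'X^4 - (coef_a1 P rho)%:P * 'X^3 + (coef_a2 P rho)%:P * 'X^2
         - (coef_a3 P rho)%:P * 'X + (coef_a4 P rho)%:P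
     /\ 0 < coef_a1 P rho /\ 0 < coef_A2 P rho /\ 0 < coef_A3 P rho).
Proof.
move=> hC hL hsa hss hmu hz hk hdb.
have ha : 0 < a_c P by rewrite /a_c; pos.
have hg : 0 < gamma_c P by rewrite /gamma_c; pos.
have hb : 0 < b0_c P by rewrite /b0_c; pos.
have hn : 0 < nu_c P.
  rewrite (_ : nu_c P = pzeta P + 4%:R / 3%:R * pmu P); last by rewrite /nu_c /lam_c; field.
  by apply: ltr_wpDl hz _; pos.
have cpos : forall rho, 0 < rho ->
   [/\ 0 < coef_a1 P rho, 0 < coef_A2 P rho, 0 < coef_A3 P rho,
      0 < coef_a3 P rho & 0 < coef_a4 P rho].
  move=> rho hr.
  pose S := rho ^+ 2 / 3%:R; pose K := 2%:R / 3%:R * pkappa P.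
  pose G := 2%:R / 3%:R * gamma_c P; pose m := pC P * b0_c P.
  have E1 : coef_a1 P rho = f1 S (a_c P) K (nu_c P) G m by rewrite /coef_a1 /f1 /S /K /G /m; field.
  have E2 : coef_a2 P rho = f2 S (a_c P) K (nu_c P) G m by rewrite /coef_a2 /f2 /S /K /G /m; field.
  have E3 : coef_a3 P rho = f3 S (a_c P) K (nu_c P) G m by rewrite /coef_a3 /f3 /S /K /G /m; field.
  have E4 : coef_a4 P rho = f4 S (a_c P) K (nu_c P) G m by rewrite /coef_a4 /f4 /S /K /G /m; field.
  have hS : 0 < S by rewrite /S; pos.
  have hK : 0 < K by rewrite /K; pos.
  have hG : 0 < G by rewrite /G; pos.
  have hm : 0 < m by rewrite /m; pos.
  have [h1 h2 h3 h4 h5] := coefs_pos_gen hS ha hK hn hG hm.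
  by rewrite /coef_A2 /coef_A3 E1 E2 E3 E4.
split; last first.
  move=> rho hr; have [h1 h2 h3 _ _] := cpos rho hr.
  by split => //; apply: charpoly_Arho.
move=> xi nz z.
have hr := xnorm_gt0 nz.
have [h1 h2 h3 h4 h5] := cpos _ hr.
rewrite eigenvalue_root_char.
have -> : char_poly (Axi P xi) = map_poly (real_complex R) (char_poly (Arho P (xnorm xi))).
  by rewrite map_char_poly.
rewrite charpoly_Arho // => /quartic_root_re [e1 e2].
rewrite -complexRe (_ : (0 : R[i]) = ((0 : R)%:C)%C) // ltcR.
exact: (hurwitz4 h1 h4 h5 h2 h3 e1 e2).
Qed.
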